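(* Let $p=d/n$, and let $\sigma,\theta$ satisfy the hypotheses: $\theta>1$, $\sigma\in(0,1]$, $\left(\frac{\sigma e d}{2\theta}\right)^{\theta}\le \frac{\sigma}{2e}$ and $d=o(n^{1-1/\theta})$. Let $\Delta,\tau>0$ with $m:=(\Delta-2\theta)\tau>1$, $$\left(\frac{\sigma e d}{m}\right)^{m}\le \frac{\sigma}{4e},$$ and $d=o(n^{1-1/m})$. Then w.h.p. $G_{n,p}$ contains no pair of sets $T\subseteq S\subseteq[n]$ with $|S|=s\le\sigma n$, $|T|\ge \tau s$, and $d_S(v)\ge \Delta$ for every $v\in T$.
   Context: $G_{n,p}$ is the binomial random graph on $[n]$; $d_S(v)$ denotes the number of neighbors of $v$ in $S$. W.h.p. means with probability tending to 1 as $n\to\infty$. *)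

(* Defs.v *)
From Stdlib Require Import Reals.
From mathcomp Require Import all_boot.
Set Implicit Arguments. Unset Strict Implicit. Unset Printing Implicit Defensive.

Definition Rleb (x y : R) : bool := if Rle_dec x y then true else false.

Definition edges (n : nat) : {set {set 'I_n}} := [set e : {set 'I_n} | #|e| == 2].

(* d_S(v) : number of neighbours of v in S in the graph G (G \subset edges n) *)
Definition degS (n : nat) (G : {set {set 'I_n}}) (S : {set 'I_n}) (v : 'I_n) : nat :=
  #|[set u in S | [set u; v] \in G]|.

Definition gnp_weight (n : nat) (p : R) (G : {set {set 'I_n}}) : R :=
  Rmult (pow p #|G|) (pow (Rminus 1 p) (subn 'C(n, 2) #|G|)).

Definition gnp_prob (n : nat) (p : R) (P : {set {set 'I_n}} -> bool) : R :=
  \big[Rplus/R0]_(G : {set {set 'I_n}} | (G \subset edges n) && P G) gnp_weight p G.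

Definition bad_pair (n : nat) (sigma tau Delta : R) (G : {set {set 'I_n}}) : bool :=
  [exists S : {set 'I_n}, exists T : {set 'I_n},
    [&& T \subset S, 0 < #|S|,
        Rleb (INR #|S|) (Rmult sigma (INR n)),
        Rleb (Rmult tau (INR #|S|)) (INR #|T|)
      & [forall v in T, Rleb Delta (INR (degS G S v))]]].

(* Main.v *)
Require Import Defs.
From HB Require Import structures.
From Stdlib Require Import Reals Lra Lia ZArith.
From mathcomp Require Import all_boot.
From mathcomp Require Import zify.
Open Scope R_scope.
Set Implicit Arguments. Unset Strict Implicit.

HB.instance Definition _ := Monoid.isComLaw.Build R R0 Rplus (fun x y z => esym (Rplus_assoc x y z)) Rplus_comm Rplus_0_l.

Lemma big_Rmult_l (I : Type) (r : seq I) (P : pred I) (F : I -> R) c :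
  c * \big[Rplus/R0]_(i <- r | P i) F i = \big[Rplus/R0]_(i <- r | P i) (c * F i).
Proof.
apply: (big_rec2 (fun x y => c * x = y)); first by rewrite Rmult_0_r.
by move=> i y1 y2 _ <-; rewrite Rmult_plus_distr_l.
Qed.

Lemma big_Rle (I : Type) (r : seq I) (P : pred I) (F G : I -> R) :
  (forall i, P i -> F i <= G i) ->
  \big[Rplus/R0]_(i <- r | P i) F i <= \big[Rplus/R0]_(i <- r | P i) G i.
Proof.
move=> H; apply: (big_ind2 (fun x y => x <= y)); first lra.
  by move=> *; lra.
exact: H.
Qed.

Lemma big_Rge0 (I : Type) (r : seq I) (P : pred I) (F : I -> R) :
  (forall i, P i -> 0 <= F i) -> 0 <= \big[Rplus/R0]_(i <- r | P i) F i.
Proof.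
move=> H; apply: (big_ind (fun x => 0 <= x)); first lra.
  by move=> *; lra.
exact: H.
Qed.

Lemma L1 (X : finType) (p : R) : forall k (A K : {set X}), #|A :\: K| = k -> K \subset A ->
  \big[Rplus/R0]_(B : {set X} | (B \subset A) && (K \subset B))
     (pow p #|B| * pow (1 - p) (#|A| - #|B|)%nat) = pow p #|K|.
Proof.
elim=> [|k IH] A K hk hKA.
  have eAK : A = K.
    apply/eqP; rewrite eqEsubset andbC hKA /=.
    by rewrite -setD_eq0 -cards_eq0 hk.
  subst A.
  rewrite (eq_bigl (pred1 K)); last first.
    by move=> B /=; rewrite -eqEsubset eq_sym.
  by rewrite big_pred1_eq subnn /= Rmult_1_r.
have : (0 < #|A :\: K|)%nat by rewrite hk.
case/card_gt0P => a; rewrite inE => /andP [aK aA].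
rewrite (bigID [pred B : {set X} | a \in B]) /=.
have h1 : #|A :\: (a |: K)| = k.
  have : #|A :\: K| = #|A :\: (a |: K)|.+1.
    by rewrite (cardsD1 a (A :\: K)) inE aK aA /= setDDl setUC.
  by rewrite hk => -[].
rewrite (eq_bigl (fun B : {set X} => (B \subset A) && ((a |: K) \subset B))); last first.
  move=> B /=; rewrite subUset sub1set. by case: (B \subset A); case: (a \in B); case: (K \subset B).
rewrite IH //; last by rewrite subUset sub1set aA hKA.
rewrite cardsU1 aK /=.
have h2 : #|(A :\ a) :\: K| = k.
  have : #|A :\: K| = #|(A :\ a) :\: K|.+1.
    by rewrite (cardsD1 a (A :\: K)) inE aK aA /= setDDl setDDl setUC.
  by rewrite hk => -[].
have hA : #|A| = (#|A :\ a|).+1 by rewrite (cardsD1 a A) aA.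
rewrite (eq_bigr (fun B : {set X} => (1 - p) * (pow p #|B| * pow (1 - p) (#|A :\ a| - #|B|)%nat)))
  -?big_Rmult_l.
rewrite (eq_bigl (fun B : {set X} => (B \subset A :\ a) && (K \subset B))); last first.
  move=> B /=; rewrite subsetD1 andbAC; done.
rewrite IH //; last by rewrite subsetD1 hKA.
rewrite /= add0n; ring.
move=> B /andP [/andP [hB _] haB].
rewrite hA subSn; last first.
  apply: subset_leq_card; by rewrite subsetD1 hB.
rewrite /=; ring.
Qed.
Lemma iter_Rplus n c : iter n (Rplus c) 0 = INR n * c.
Proof. elim: n => [|n IH]; first by rewrite /=; ring. rewrite S_INR /= IH; ring. Qed.

Lemma big_Rconst (I : finType) (A : {pred I}) c :
  \big[Rplus/R0]_(i in A) c = INR #|A| * c.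
Proof. by rewrite big_const iter_Rplus. Qed.

Lemma G1 (X : finType) (P : pred nat) (g : nat -> R) :
  \big[Rplus/R0]_(U : {set X} | P #|U|) g #|U| =
  \big[Rplus/R0]_(s < #|X|.+1 | P s) (INR 'C(#|X|, s) * g s).
Proof.
rewrite (partition_big (fun U : {set X} => (inord #|U| : 'I_(#|X|.+1))) (fun s : 'I_(#|X|.+1) => P s)); last first.
  by move=> U hU; rewrite inordK // ltnS max_card.
apply: eq_bigr => s hs.
rewrite (eq_bigr (fun _ => g s)); last first.
  move=> U /andP [_ /eqP <-]; rewrite inordK // ltnS max_card //.
rewrite (eq_bigl [in [set U : {set X} | #|U| == s]]); last first.
  move=> U; rewrite !inE /=.
  apply/andP/eqP.
    by move=> [_ /eqP <-]; rewrite inordK // ltnS max_card.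
  move=> hU; split; first by rewrite hU.
  by apply/eqP; apply: val_inj; rewrite /= inordK ?hU // ltnS max_card.
by rewrite big_Rconst card_draws.
Qed.
Lemma inj_le (A B : finType) (f : A -> B) (D : {set A}) (E : {set B}) :
  {in D &, injective f} -> (forall x, x \in D -> f x \in E) -> (#|D| <= #|E|)%N.
Proof.
move=> inj hf; rewrite -(card_in_imset inj); apply: subset_leq_card.
by apply/subsetP => y /imsetP [x hx ->]; exact: hf.
Qed.

Lemma set2_eq (T : finType) (a b c d : T) : [set a; b] = [set c; d] ->
  (a = c /\ b = d) \/ (a = d /\ b = c).
Proof.
move=> H.
have ha : a \in [set c; d] by rewrite -H !inE eqxx.
have hb : b \in [set c; d] by rewrite -H !inE eqxx orbT.
have hc : c \in [set a; b] by rewrite H !inE eqxx.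
have hd : d \in [set a; b] by rewrite H !inE eqxx orbT.
rewrite !inE in ha hb hc hd.
case/orP: ha => /eqP ha; case/orP: hb => /eqP hb; subst; auto.
- case/orP: hd => /eqP hd; subst; auto.
- case/orP: hc => /eqP hc; subst; auto.
Qed.

Definition eG (n : nat) (G : {set {set 'I_n}}) (U : {set 'I_n}) : nat :=
  #|[set e in G | e \subset U]|.

Lemma countA n (G : {set {set 'I_n}}) (S T : {set 'I_n}) :
  G \subset edges n -> T \subset S ->
  (\sum_(v in T) degS G S v <= 2 * eG G T + eG G S)%N.
Proof.
move=> hG hTS.
have -> : (\sum_(v in T) degS G S v =
   #|[set x : 'I_n * 'I_n | (x.1 \in T) && ((x.2 \in S) && ([set x.2; x.1] \in G))]|)%N.
  rewrite /degS.
  rewrite (eq_bigr (fun v => \sum_(u | (u \in S) && ([set u; v] \in G)) 1)%N); last first.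
    by move=> v _; rewrite sum1_card; apply: eq_card => u; rewrite inE.
  rewrite (pair_big_dep (fun v => v \in T) (fun v u => (u \in S) && ([set u; v] \in G))) /=.
  by rewrite sum1_card; apply: eq_card => x; rewrite inE.
set P := [set x : 'I_n * 'I_n | _].
have card2 : forall x, x \in P -> x.1 != x.2.
  move=> x; rewrite inE => /and3P [_ _ hx].
  move/subsetP: hG => /(_ _ hx); rewrite inE.
  apply: contraL => /eqP ->; rewrite setUid cards1.
  done.
set PT := [set x : 'I_n * 'I_n | x.2 \in T].
set L := [set x : 'I_n * 'I_n | (x.1 < x.2)%N].
rewrite -(cardsID PT P) -(cardsID L (P :&: PT)).
have h1 : (#|P :&: PT :&: L| <= eG G T)%N.
  apply: (inj_le (f := fun x : 'I_n * 'I_n => [set x.2; x.1])).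
    move=> [a1 b1] [a2 b2]; rewrite !inE /= => /andP [/andP [_ _] h1] /andP [/andP [_ _] h2] /set2_eq.
    case=> [[-> ->] //|[e1 e2]]; subst.
    by move: (ltn_trans h1 h2); rewrite ltnn.
  move=> [a b]; rewrite !inE /= => /andP [/andP [/and3P [ha hb hab] hbT] _].
  by rewrite hab subUset !sub1set ha hbT.
have h3 : (#|P :&: PT :\: L| <= eG G T)%N.
  apply: (inj_le (f := fun x : 'I_n * 'I_n => [set x.2; x.1])).
    move=> [a1 b1] [a2 b2] hx1 hx2 /= /set2_eq.
    case=> [[-> ->] //|[e1 e2]]; subst.
    have ne1 := (card2 _ (setIdP (setDP hx1).1).1).
    move: hx1 hx2; rewrite !inE /= -!leqNgt => /andP [k1 _] /andP [k2 _].
    have e : a2 = b2 by apply/val_inj/eqP; rewrite /= eqn_leq k1 k2.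
    by rewrite e eqxx in ne1.
  move=> [a b]; rewrite !inE /= => /andP [_ /andP [/and3P [ha hb hab] hbT]].
  by rewrite hab subUset !sub1set ha hbT.
have h2 : (#|P :\: PT| <= eG G S)%N.
  apply: (inj_le (f := fun x : 'I_n * 'I_n => [set x.2; x.1])).
    move=> [a1 b1] [a2 b2]; rewrite !inE /= => /andP [hb1 /and3P [ha1 _ _]] /andP [hb2 /and3P [ha2 _ _]] /set2_eq.
    case=> [[-> ->] //|[e1 e2]]; subst.
    by rewrite ha2 in hb1.
  move=> [a b]; rewrite !inE /= => /andP [_ /and3P [ha hb hab]].
  by rewrite hab subUset !sub1set hb (subsetP hTS _ ha).
rewrite mul2n -addnn; apply: leq_add; first apply: leq_add; done.
Qed.

Lemma Rleb_iff x y : Rleb x y = true <-> x <= y.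
Proof. rewrite /Rleb; case: Rle_dec => h; split => //. Qed.

Lemma INR_sum (I : finType) (A : {pred I}) (F : I -> nat) :
  INR (\sum_(i in A) F i)%N = \big[Rplus/R0]_(i in A) INR (F i).
Proof. by apply: (big_morph INR plus_INR). Qed.

Lemma arith1 D th t s T eT eS : 0 < D - 2*th -> t*s <= T -> D*T <= 2*eT + eS -> eT < th*T -> (D-2*th)*t*s <= eS.
Proof. move=> h1 h2 h3 h4. have := Rmult_le_compat_l _ _ _ (Rlt_le _ _ h1) h2. nra. Qed.

Definition Dense n (sigma c : R) (G : {set {set 'I_n}}) : bool :=
  [exists U : {set 'I_n}, [&& (0 < #|U|)%N, Rleb (INR #|U|) (sigma * INR n)
     & Rleb (c * INR #|U|) (INR (eG G U))]].

Lemma badD n (sigma tau Delta theta : R) (G : {set {set 'I_n}}) :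
  G \subset edges n -> 0 < tau -> 0 < Delta - 2 * theta ->
  bad_pair sigma tau Delta G -> Dense sigma theta G || Dense sigma ((Delta - 2 * theta) * tau) G.
Proof.
move=> hG htau hD /existsP [S /existsP [T /and5P [hTS hS0 /Rleb_iff hS /Rleb_iff hT /forallP hdeg]]].
have {hS} hS : INR #|S| <= sigma * INR n := hS.
have {hT} hT : tau * INR #|S| <= INR #|T| := hT.
have hsum : Delta * INR #|T| <= 2 * INR (eG G T) + INR (eG G S).
  have := countA hG hTS => /leP /le_INR; rewrite plus_INR mult_INR INR_sum /=.
  have : \big[Rplus/R0]_(i in T) Delta <= \big[Rplus/R0]_(i in T) INR (degS G S i).
    by apply: big_Rle => v hv; move: (hdeg v); rewrite hv /= => /Rleb_iff.
  rewrite big_Rconst => h1 h2; rewrite Rmult_comm; apply: Rle_trans h1 _; apply: Rle_trans h2 _; lra.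
have hS0' : 0 < INR #|S| by apply: lt_0_INR; apply/ltP.
have hTS' : INR #|T| <= INR #|S| by apply: le_INR; apply/leP; exact: subset_leq_card.
have hT0 : (0 < #|T|)%N.
  have := Rmult_lt_0_compat _ _ htau hS0' => hh. apply/ltP/INR_lt. exact: Rlt_le_trans hh hT.
case: (Rle_dec (theta * INR #|T|) (INR (eG G T))) => hc.
  apply/orP; left; apply/existsP; exists T; rewrite hT0 /=.
  apply/andP; split; apply/Rleb_iff; [exact: Rle_trans hTS' hS | exact: hc].
apply/orP; right; apply/existsP; exists S; rewrite hS0 /=.
apply/andP; split; apply/Rleb_iff; first exact: hS.
apply Rnot_le_lt in hc; exact: arith1 hD hT hsum hc.
Qed.
Definition kc (x : R) : nat := Z.to_nat (1 - up (- x)).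

Lemma kc_ge x : 0 <= x -> x <= INR (kc x).
Proof.
move=> hx; rewrite /kc; have [h1 h2] := archimed (- x).
have hz : (0 <= 1 - up (- x))%Z.
  apply: le_IZR; rewrite minus_IZR; lra.
rewrite INR_IZR_INZ Z2Nat.id // minus_IZR; lra.
Qed.

Lemma kc_le x (e : nat) : x <= INR e -> (kc x <= e)%N.
Proof.
move=> hx; rewrite /kc; have [h1 h2] := archimed (- x).
have : (- Z.of_nat e < up (- x))%Z.
  apply: lt_IZR; rewrite opp_IZR -INR_IZR_INZ; lra.
move=> h; apply/leP; lia.
Qed.


Lemma big_ge_term (I : finType) (P : pred I) (F : I -> R) i0 :
  P i0 -> (forall i, P i -> 0 <= F i) -> F i0 <= \big[Rplus/R0]_(i | P i) F i.
Proof.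
move=> h0 hF; rewrite (bigD1 i0) //=.
have : 0 <= \big[Rplus/R0]_(i | P i && (i != i0)) F i.
  by apply: big_Rge0 => i /andP [hi _]; exact: hF.
lra.
Qed.

Lemma le_addr a b c : a <= b -> 0 <= c -> a <= b + c.
Proof. move=> *; lra. Qed.

Lemma exists_sub (T : finType) (A : {set T}) k : (k <= #|A|)%N ->
  exists K : {set T}, (K \subset A) && (#|K| == k).
Proof.
move=> hk.
have : (0 < #|[set K : {set T} | K \subset A & #|K| == k]|)%N by rewrite cards_draws bin_gt0.
by case/card_gt0P => K; rewrite inE => hK; exists K.
Qed.

Definition EU n (U : {set 'I_n}) : {set {set 'I_n}} := [set e : {set 'I_n} | e \subset U & #|e| == 2%N].

Lemma card_EU n (U : {set 'I_n}) : #|EU U| = 'C(#|U|, 2).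
Proof. by rewrite /EU cards_draws. Qed.

Lemma UB n (sigma c p : R) : 0 <= p <= 1 -> 0 < c ->
  gnp_prob p (fun G : {set {set 'I_n}} => Dense sigma c G) <=
  \big[Rplus/R0]_(U : {set 'I_n} | (0 < #|U|)%N && Rleb (INR #|U|) (sigma * INR n))
     (INR 'C('C(#|U|, 2), kc (c * INR #|U|)) * pow p (kc (c * INR #|U|))).
Proof.
move=> hp hc.
set VU := fun U : {set 'I_n} => (0 < #|U|)%N && Rleb (INR #|U|) (sigma * INR n).
set cK := fun (U : {set 'I_n}) (K : {set {set 'I_n}}) => (K \subset EU U) && (#|K| == kc (c * INR #|U|)).
have hw : forall G : {set {set 'I_n}}, 0 <= gnp_weight p G.
  by move=> G; rewrite /gnp_weight; apply: Rmult_le_pos; apply: pow_le; lra.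
have step1 : gnp_prob p (fun G : {set {set 'I_n}} => Dense sigma c G) <=
   \big[Rplus/R0]_(G : {set {set 'I_n}} | G \subset edges n)
      (gnp_weight p G * \big[Rplus/R0]_(U | VU U) \big[Rplus/R0]_(K | cK U K) (if K \subset G then 1 else 0)).
  rewrite /gnp_prob [X in _ <= X](bigID [pred G : {set {set 'I_n}} | Dense sigma c G]) /=.
  have hpos : 0 <= \big[Rplus/R0]_(G : {set {set 'I_n}} | (G \subset edges n) && ~~ Dense sigma c G)
      (gnp_weight p G * \big[Rplus/R0]_(U | VU U) \big[Rplus/R0]_(K | cK U K) (if K \subset G then 1 else 0)).
    apply: big_Rge0 => G _; apply: Rmult_le_pos => //.
    apply: big_Rge0 => U _; apply: big_Rge0 => K _; case: ifP => _; lra.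
  apply: le_addr hpos.
  suff : \big[Rplus/R0]_(G : {set {set 'I_n}} | (G \subset edges n) && Dense sigma c G) gnp_weight p G <=
     \big[Rplus/R0]_(G : {set {set 'I_n}} | (G \subset edges n) && Dense sigma c G)
      (gnp_weight p G * \big[Rplus/R0]_(U | VU U) \big[Rplus/R0]_(K | cK U K) (if K \subset G then 1 else 0)).
    done.
  apply: big_Rle => G /andP [hG /existsP [U /and3P [hU0 hUs /Rleb_iff hUe]]].
  rewrite -{1}(Rmult_1_r (gnp_weight p G)); apply: Rmult_le_compat_l => //.
  have hk : (kc (c * INR #|U|) <= #|[set e in G | e \subset U]|)%N by exact: kc_le.
  have [K /andP [hK /eqP hKk]] := exists_sub hk.
  have hVU : VU U by rewrite /VU hU0.
  rewrite (bigD1 U hVU) /=; apply: le_addr; last first.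
    by apply: big_Rge0 => U' _; apply: big_Rge0 => K' _; case: ifP => _; lra.
  have hcK : cK U K.
    rewrite /cK hKk eqxx andbT; apply/subsetP => e /(subsetP hK); rewrite !inE => /andP [heG heU].
    by rewrite heU; move/subsetP: hG => /(_ _ heG); rewrite inE.
  rewrite (bigD1 K hcK) /=; apply: le_addr; last first.
    by apply: big_Rge0 => K' _; case: ifP => _; lra.
  have -> : K \subset G by apply/subsetP => e /(subsetP hK); rewrite inE => /andP [].
  lra.
apply: Rle_trans step1 _; apply: Req_le.
have hE : #|edges n| = 'C(n, 2).
  by rewrite /edges card_draws card_ord.
rewrite (eq_bigr (fun G : {set {set 'I_n}} => \big[Rplus/R0]_(U | VU U) \big[Rplus/R0]_(K | cK U K)
    (if K \subset G then gnp_weight p G else 0))); last first.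
  move=> G _; rewrite big_Rmult_l; apply: eq_bigr => U _; rewrite big_Rmult_l.
  by apply: eq_bigr => K _; case: ifP => _; ring.
rewrite exchange_big /=; apply: eq_bigr => U hU.
rewrite exchange_big /=.
have hk := fun K => eq_refl (cK U K).
rewrite (eq_bigr (fun K : {set {set 'I_n}} => pow p (kc (c * INR #|U|)))); last first.
  move=> K /andP [hKE /eqP hKk].
  rewrite -big_mkcondr /= -hKk.
  have hKE' : K \subset edges n.
    apply: subset_trans hKE _; apply/subsetP => e; rewrite !inE => /andP [].
    by move=> _ ->.
  rewrite -(L1 p (erefl _) hKE'); apply: eq_bigr => G _.
  by rewrite /gnp_weight hE.
rewrite (eq_bigl [in [set K : {set {set 'I_n}} | K \subset EU U & #|K| == kc (c * INR #|U|)]]); last first.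
  by move=> K; rewrite !inE.
by rewrite big_Rconst cards_draws card_EU.
Qed.


Lemma exp_le x y : x <= y -> exp x <= exp y.
Proof. case=> h; [left; exact: exp_increasing | right; by rewrite h]. Qed.

Lemma exp_pow_INR x k : exp x ^ k = exp (INR k * x).
Proof.
elim: k => [|k IH]; first by rewrite /= Rmult_0_l exp_0.
by rewrite S_INR /= IH -exp_plus; congr exp; ring.
Qed.

Lemma e_ge2 : 2 <= exp 1.
Proof. have := exp_ineq1_le 1; lra. Qed.

Lemma step_e k : (INR k + 1) ^ k <= exp 1 * INR k ^ k.
Proof.
case: k => [|k]; first by rewrite /= ; have := e_ge2; lra.
set x := INR k.+1.
have hx : 0 < x by apply: lt_0_INR; lia.
have -> : x + 1 = x * (1 + / x) by field; lra.
rewrite Rpow_mult_distr Rmult_comm; apply: Rmult_le_compat_r.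
  by apply: pow_le; lra.
have h1 : (1 + / x) ^ k.+1 <= exp (/ x) ^ k.+1.
  apply: pow_incr; split; last exact: exp_ineq1_le.
  have := Rinv_0_lt_compat _ hx; lra.
apply: Rle_trans h1 _; rewrite exp_pow_INR -/x.
right; congr exp; field; lra.
Qed.

Lemma fact_lb k : INR k ^ k <= INR k`! * exp 1 ^ k.
Proof.
elim: k => [|k IH]; first by rewrite /=; lra.
rewrite factS mult_INR S_INR /=.
have h := step_e k.
have hk : 0 <= INR k by apply: pos_INR.
have he : 0 < exp 1 := exp_pos 1.
have : (INR k + 1) * (INR k + 1) ^ k <= (INR k + 1) * (exp 1 * INR k ^ k).
  apply: Rmult_le_compat_l => //; lra.
have : (INR k + 1) * exp 1 * INR k ^ k <= (INR k + 1) * exp 1 * (INR k`! * exp 1 ^ k).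
  apply: Rmult_le_compat_l => //; apply: Rmult_le_pos => //; lra.
nra.
Qed.

Lemma ffact_le n m : (n ^_ m <= n ^ m)%N.
Proof.
elim: m n => [|m IH] n //.
rewrite ffactnS expnS; apply: leq_mul => //.
apply: leq_trans (IH _) _; case: (m) => [|m']; first by rewrite !expn0.
by rewrite leq_exp2r //; exact: leq_pred.
Qed.

Lemma INR_expn N k : INR (N ^ k)%N = INR N ^ k.
Proof. elim: k => [|k IH] //; by rewrite expnS -multE mult_INR IH. Qed.

Lemma binom_ub N k : (0 < k)%N -> INR 'C(N, k) <= (exp 1 * INR N / INR k) ^ k.
Proof.
move=> hk.
have hK : 0 < INR k by apply: lt_0_INR; apply/ltP.
have h1 : INR 'C(N, k) * INR k`! <= INR N ^ k.
  rewrite -mult_INR multE bin_ffact -INR_expn; apply: le_INR; apply/leP; exact: ffact_le.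
have h2 := fact_lb k.
have hkk : 0 < INR k ^ k by apply: pow_lt.
have hC : 0 <= INR 'C(N, k) by apply: pos_INR.
rewrite /Rdiv !Rpow_mult_distr pow_inv.
apply: (Rmult_le_reg_r (INR k ^ k)) => //.
rewrite Rmult_assoc Rinv_l; last lra.
rewrite Rmult_1_r.
have : INR 'C(N, k) * INR k ^ k <= INR 'C(N, k) * (INR k`! * exp 1 ^ k).
  exact: Rmult_le_compat_l.
have : 0 <= exp 1 ^ k by apply: pow_le; have := exp_pos 1; lra.
nra.
Qed.

Lemma bin2_le s : INR 'C(s, 2) * 2 <= INR s ^ 2.
Proof.
have : ('C(s, 2) * 2`! <= s ^ 2)%N by rewrite bin_ffact; exact: ffact_le.
move/leP/le_INR; rewrite -INR_expn mult_INR /=; lra.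
Qed.

Lemma Rpower_dec y u v : 0 < y <= 1 -> u <= v -> Rpower y v <= Rpower y u.
Proof.
move=> [hy0 hy1] huv; rewrite /Rpower; apply: exp_le.
have : ln y <= 0.
  case: hy1 => h; last by rewrite h ln_1; lra.
  rewrite -ln_1; left; exact: ln_increasing.
nra.
Qed.

Lemma term_bound (n s : nat) (sigma c d : R) :
  1 < c -> 0 < sigma <= 1 -> 0 < d -> (0 < s)%N -> INR s <= sigma * INR n ->
  Rpower (sigma * exp 1 * d / (2 * c)) c <= sigma / (2 * exp 1) ->
  INR 'C(n, s) * (INR 'C('C(s, 2), kc (c * INR s)) * pow (d / INR n) (kc (c * INR s)))
    <= pow (Rpower (INR s / (sigma * INR n)) (c - 1) / 2) s.
Proof.
move=> hc [hs0 hs1] hd hs.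
have he := exp_pos 1; have he2 := e_ge2.
set x := INR s; set N := INR n; set k := kc (c * x); set K := INR k; set M := INR 'C(s, 2).
set a := sigma * exp 1 * d / (2 * c); set z := x / (sigma * N); set y := a * z.
move=> hsn hA.
have hx : 0 < x by apply: lt_0_INR; apply/ltP.
have hN : 0 < N.
  have : 0 < sigma * N by lra.
  move=> h; apply: (Rmult_lt_reg_l sigma) => //; lra.
have hK : c * x <= K by apply: kc_ge; nra.
have hK0 : 0 < K by nra.
have hk : (0 < k)%N by apply/ltP/INR_lt; rewrite /= -/K; lra.
have ha : 0 < a by rewrite /a; apply: Rdiv_lt_0_compat; [apply: Rmult_lt_0_compat; [apply: Rmult_lt_0_compat|] | ]; lra.
have ha1 : a < 1.
  apply: Rnot_le_lt => h1.
  have := Rle_Rpower a 0 c h1 ltac:(lra); rewrite Rpower_O; last lra.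
  have : sigma / (2 * exp 1) < 1.
    apply: (Rmult_lt_reg_r (2 * exp 1)); first lra.
    rewrite /Rdiv Rmult_assoc Rinv_l; lra.
  lra.
have hz : 0 < z by rewrite /z; apply: Rdiv_lt_0_compat; nra.
have hz1 : z <= 1.
  rewrite /z; apply: (Rmult_le_reg_r (sigma * N)); first nra.
  rewrite /Rdiv Rmult_assoc Rinv_l; lra.
have hy : 0 < y by rewrite /y; nra.
have hy1 : y <= 1 by rewrite /y; nra.
have hM := bin2_le s; rewrite -/M -/x in hM.
have hM0 : 0 <= M by apply: pos_INR.
have B1 := binom_ub n hs; rewrite -/x -/N in B1.
have B2 := binom_ub 'C(s, 2) hk; rewrite -/M -/K in B2.
have B3 : (exp 1 * M / K) ^ k * (d / N) ^ k <= y ^ k.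
  rewrite -Rpow_mult_distr; apply: pow_incr; split.
    apply: Rmult_le_pos; last by apply: Rlt_le; apply: Rdiv_lt_0_compat.
    apply: Rmult_le_pos; first nra. by apply: Rlt_le; apply: Rinv_0_lt_compat.
  have -> : y = exp 1 * (x * x / 2) * (d / N) / (c * x).
    rewrite /y /a /z; field; repeat split; lra.
  have h1 : exp 1 * M / K * (d / N) = (exp 1 * M * (d / N)) * / K by field; lra.
  have h2 : exp 1 * (x * x / 2) * (d / N) / (c * x) = (exp 1 * (x * x / 2) * (d / N)) * / (c * x) by field; lra.
  rewrite h1 h2; apply: Rmult_le_compat.
  - apply: Rmult_le_pos; first nra. by apply: Rlt_le; apply: Rdiv_lt_0_compat.
  - by apply: Rlt_le; apply: Rinv_0_lt_compat.
  - apply: Rmult_le_compat_r; first by apply: Rlt_le; apply: Rdiv_lt_0_compat.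
    apply: Rmult_le_compat_l; first lra. simpl in hM; lra.
  - apply: Rinv_le_contravar => //; nra.
have B4 : y ^ k <= Rpower y c ^ s.
  rewrite -(Rpower_pow k y hy) -(Rpower_pow s); last by rewrite /Rpower; exact: exp_pos.
  rewrite Rpower_mult -/x -/K; apply: Rpower_dec => //; lra.
have B5 : exp 1 * N / x * Rpower y c <= Rpower z (c - 1) / 2.
  rewrite /y -Rpower_mult_distr //.
  have -> : Rpower z c = Rpower z (c - 1) * z.
    by rewrite -{1}(Rplus_0_r c) -(Rplus_opp_l 1) -Rplus_assoc Rpower_plus Rpower_1.
  have -> : exp 1 * N / x * (Rpower a c * (Rpower z (c - 1) * z)) =
     (exp 1 / sigma) * Rpower a c * Rpower z (c - 1).
    rewrite /z; field; repeat split; lra.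
  have hzc : 0 < Rpower z (c - 1) by rewrite /Rpower; exact: exp_pos.
  have -> : Rpower z (c - 1) / 2 = (exp 1 / sigma) * (sigma / (2 * exp 1)) * Rpower z (c - 1).
    field; lra.
  apply: Rmult_le_compat_r; first lra.
  apply: Rmult_le_compat_l => //.
  by apply: Rlt_le; apply: Rdiv_lt_0_compat.
have hpk : 0 <= (d / N) ^ k by apply: pow_le; apply: Rlt_le; apply: Rdiv_lt_0_compat.
have hC1 : 0 <= INR 'C(n, s) by apply: pos_INR.
have hC2 : 0 <= INR 'C('C(s, 2), k) by apply: pos_INR.
apply: Rle_trans (_ : (exp 1 * N / x) ^ s * Rpower y c ^ s <= _); last first.
  rewrite -Rpow_mult_distr; apply: pow_incr; split => //.
  apply: Rmult_le_pos; last by rewrite /Rpower; apply: Rlt_le; exact: exp_pos.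
  apply: Rlt_le; apply: Rdiv_lt_0_compat => //; nra.
apply: Rmult_le_compat => //.
  by apply: Rmult_le_pos.
apply: Rle_trans B4.
apply: Rle_trans B3.
apply: Rmult_le_compat_r => //.
Qed.


Lemma nat_above r : exists N : nat, r < INR N.
Proof.
have [h1 h2] := archimed r.
exists (Z.to_nat (up r)).
case: (Z_lt_le_dec (up r) 0) => h.
  have -> : Z.to_nat (up r) = 0%N by lia.
  rewrite /=; have := IZR_lt _ _ h; lra.
by rewrite INR_IZR_INZ Z2Nat.id.
Qed.

Lemma Q1 (s0 : nat) (B : R) m : 0 <= B ->
  \big[Rplus/R0]_(0 <= s < m) (if (s <= s0)%N then B else 0) <= INR (minn m s0.+1) * B.
Proof.
move=> hB; elim: m => [|m IH]; first by rewrite big_nil /=; lra.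
rewrite big_nat_recr //=.
case: (leqP m s0) => hm.
  have -> : minn m.+1 s0.+1 = (minn m s0.+1).+1.
    by rewrite minnSS (minn_idPl hm) (minn_idPl (leqW hm)).
  rewrite S_INR; lra.
have -> : minn m.+1 s0.+1 = minn m s0.+1.
  by rewrite (minn_idPr (leqW hm)) (minn_idPr hm).
lra.
Qed.

Lemma Q2 (s0 : nat) m :
  \big[Rplus/R0]_(0 <= s < m) (if (s0 < s)%N then (/2) ^ s else 0) <= (/2) ^ s0 - (/2) ^ (maxn m.-1 s0).
Proof.
elim: m => [|m IH]; first by rewrite big_nil /= max0n; lra.
rewrite big_nat_recr //=.
case: (ltnP s0 m) => hm.
  have e1 : maxn m s0 = m by apply/maxn_idPl; exact: ltnW.
  have e2 : maxn m.-1 s0 = m.-1 by apply/maxn_idPl; rewrite -ltnS prednK //; exact: leq_ltn_trans hm.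
  rewrite e2 in IH.
  have : (/2) ^ m.-1 = 2 * (/2) ^ m.
    case: (m) hm => [//|m'] _ /=; field.
  lra.
have e3 : maxn m.-1 s0 = s0 by apply/maxn_idPr; apply: leq_trans hm; exact: leq_pred.
rewrite e3 in IH.
lra.
Qed.

Lemma Rpower_le1 z u : 0 < z <= 1 -> 0 <= u -> Rpower z u <= 1.
Proof.
move=> hz hu; have := Rle_Rpower_l z 1 u hu hz.
by rewrite /Rpower ln_1 Rmult_0_r exp_0.
Qed.

Lemma SB (n s0 : nat) (sigma c : R) : 1 < c -> 0 < sigma -> (0 < s0)%N -> 0 < INR n ->
  \big[Rplus/R0]_(s < n.+1 | (0 < s)%N && Rleb (INR s) (sigma * INR n))
      pow (Rpower (INR s / (sigma * INR n)) (c - 1) / 2) s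
   <= INR s0.+1 * (Rpower (INR s0 / (sigma * INR n)) (c - 1) / 2) + (/2) ^ s0.
Proof.
move=> hc hs hs0 hn.
set B := Rpower (INR s0 / (sigma * INR n)) (c - 1) / 2.
have hB : 0 <= B by rewrite /B /Rpower; have := exp_pos ((c - 1) * ln (INR s0 / (sigma * INR n))); lra.
rewrite -(big_mkord (fun s => (0 < s)%N && Rleb (INR s) (sigma * INR n))
   (fun s => pow (Rpower (INR s / (sigma * INR n)) (c - 1) / 2) s)).
rewrite big_mkcond /=.
apply: Rle_trans (_ : \big[Rplus/R0]_(0 <= s < n.+1)
   ((if (s <= s0)%N then B else 0) + (if (s0 < s)%N then (/2) ^ s else 0)) <= _).
  apply: big_Rle => s _.
  have h2s : 0 <= (/2) ^ s by apply: pow_le; lra.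
  case: ifP => [/andP [hs1 /Rleb_iff hsn] | _]; last first.
    by case: ifP => _; case: ifP => _; lra.
  have hx : 0 < INR s by apply: lt_0_INR; apply/ltP.
  set z := INR s / (sigma * INR n).
  have hz : 0 < z <= 1.
    split; first by apply: Rdiv_lt_0_compat => //; nra.
    rewrite /z; apply: (Rmult_le_reg_r (sigma * INR n)); first nra.
    rewrite /Rdiv Rmult_assoc Rinv_l; lra.
  have hq := Rpower_le1 (u := c - 1) hz ltac:(lra).
  have hq0 : 0 < Rpower z (c - 1) by rewrite /Rpower; exact: exp_pos.
  case: (leqP s s0) => hss0.
    have h1 : pow (Rpower z (c - 1) / 2) s <= Rpower z (c - 1) / 2.
      case: (s) hs1 => [//|s'] _ /=.
      have : (Rpower z (c - 1) / 2) ^ s' <= 1 ^ s'.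
        apply: pow_incr; lra.
      rewrite pow1 => h. have : 0 <= Rpower z (c - 1) / 2 by lra. nra.
    have h3 : Rpower z (c - 1) <= Rpower (INR s0 / (sigma * INR n)) (c - 1).
      apply: Rle_Rpower_l; first lra.
      split; first lra.
      rewrite /z /Rdiv; apply: Rmult_le_compat_r.
        by apply: Rlt_le; apply: Rinv_0_lt_compat; nra.
      by apply: le_INR; apply/leP.
    rewrite /B; lra.
  have : pow (Rpower z (c - 1) / 2) s <= (/2) ^ s by apply: pow_incr; lra.
  lra.
rewrite big_split /=.
apply: Rplus_le_compat.
  apply: Rle_trans (Q1 _ _ hB) _; apply: Rmult_le_compat_r => //.
  change (INR (minn n.+1 s0.+1) <= INR s0.+1); by apply: le_INR; apply/leP; exact: geq_minr.
apply: Rle_trans (Q2 _ _) _.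
have : 0 <= (/2) ^ (maxn n s0) by apply: pow_le; lra.
rewrite /=; lra.
Qed.


Lemma a_lt1 a sigma c : 0 < sigma <= 1 -> 0 <= c -> Rpower a c <= sigma / (2 * exp 1) -> a < 1.
Proof.
move=> hs hc hA; apply: Rnot_le_lt => h1.
have he := e_ge2.
have := Rle_Rpower a 0 c h1 hc; rewrite Rpower_O; last lra.
have : sigma / (2 * exp 1) < 1.
  apply: (Rmult_lt_reg_r (2 * exp 1)); first lra.
  rewrite /Rdiv Rmult_assoc Rinv_l; lra.
lra.
Qed.

Lemma GL (d : nat -> R) (sigma c : R) : 1 < c -> 0 < sigma <= 1 ->
  (exists N, forall n, (N <= n)%N -> 0 < d n) ->
  (exists N, forall n, (N <= n)%N -> Rpower (sigma * exp 1 * d n / (2 * c)) c <= sigma / (2 * exp 1)) ->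
  forall eps, 0 < eps -> exists N, forall n, (N <= n)%N ->
    gnp_prob (d n / INR n) (fun G : {set {set 'I_n}} => Dense sigma c G) < eps.
Proof.
move=> hc hs [N1 hd] [N2 hA] eps heps.
have he := e_ge2.
have [M hM] := pow_lt_1_zero (/2) ltac:(rewrite Rabs_pos_eq; lra) (eps / 2) ltac:(lra).
set s0 := M.+1.
have hs0 : (0 < s0)%N by [].
have hS0 : 0 < INR s0.+1 by apply: lt_0_INR; lia.
set delta := eps / INR s0.+1.
have hdelta : 0 < delta by apply: Rdiv_lt_0_compat.
set rho := Rpower delta (/ (c - 1)).
have hrho : 0 < rho by rewrite /rho /Rpower; exact: exp_pos.
have [N3 hN3] := nat_above (INR s0 / (sigma * rho)).
have [N4 hN4] := nat_above (2 * c / (sigma * exp 1)).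
exists (N1 + N2 + N3 + N4 + 1)%N => n hn.
have hn1 : (N1 <= n)%N by lia.
have hn2 : (N2 <= n)%N by lia.
have hn3 : INR N3 <= INR n by apply: le_INR; apply/leP; lia.
have hn4 : INR N4 <= INR n by apply: le_INR; apply/leP; lia.
have hdn := hd n hn1.
have hAn := hA n hn2.
have hN : 0 < INR n by apply: lt_0_INR; lia.
have ha1 := a_lt1 hs (Rlt_le _ _ (Rlt_trans _ _ _ Rlt_0_1 hc)) hAn.
have hp : 0 <= d n / INR n <= 1.
  split; first by apply: Rlt_le; apply: Rdiv_lt_0_compat.
  have hdb : d n < 2 * c / (sigma * exp 1).
    apply: (Rmult_lt_reg_r (sigma * exp 1 / (2 * c))).
      apply: Rdiv_lt_0_compat; [apply: Rmult_lt_0_compat|]; lra.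
    have -> : 2 * c / (sigma * exp 1) * (sigma * exp 1 / (2 * c)) = 1 by field; repeat split; lra.
    by have -> : d n * (sigma * exp 1 / (2 * c)) = sigma * exp 1 * d n / (2 * c) by field; lra.
  apply: (Rmult_le_reg_r (INR n)) => //.
  rewrite /Rdiv Rmult_assoc Rinv_l; lra.
have hc0 : 0 < c by lra.
have hub := UB n sigma hp hc0.
apply: Rle_lt_trans hub _.
rewrite (G1 ('I_n) (fun s => (0 < s)%N && Rleb (INR s) (sigma * INR n))
   (fun s => INR 'C('C(s, 2), kc (c * INR s)) * pow (d n / INR n) (kc (c * INR s)))) card_ord.
apply: Rle_lt_trans (_ : \big[Rplus/R0]_(s < n.+1 | (0 < s)%N && Rleb (INR s) (sigma * INR n))
      pow (Rpower (INR s / (sigma * INR n)) (c - 1) / 2) s < _).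
  apply: big_Rle => s /andP [hs1 /Rleb_iff hsn].
  exact: term_bound.
apply: Rle_lt_trans (SB hc _ hs0 hN) _; first lra.
have h2 : (/2) ^ s0 < eps / 2.
  have := hM s0 ltac:(rewrite /s0; lia); rewrite Rabs_pos_eq //; apply: pow_le; lra.
have hpos : 0 < INR s0 / (sigma * INR n) by apply: Rdiv_lt_0_compat; [apply: lt_0_INR; lia | nra].
have hlt : INR s0 / (sigma * INR n) < rho.
  apply: (Rmult_lt_reg_r (sigma * INR n)); first nra.
  rewrite /Rdiv Rmult_assoc Rinv_l; last nra.
  rewrite Rmult_1_r.
  have : INR s0 / (sigma * rho) < INR n by lra.
  move=> h; have : INR s0 < INR n * (sigma * rho).
    apply: (Rmult_lt_reg_r (/ (sigma * rho))); first by apply: Rinv_0_lt_compat; nra.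
    rewrite Rmult_assoc Rinv_r; last nra.
    by rewrite Rmult_1_r.
  nra.
have h1 : Rpower (INR s0 / (sigma * INR n)) (c - 1) < delta.
  have -> : delta = Rpower rho (c - 1).
    rewrite /rho Rpower_mult Rinv_l; last lra.
    by rewrite Rpower_1.
  apply: Rlt_Rpower_l; lra.
have : INR s0.+1 * (Rpower (INR s0 / (sigma * INR n)) (c - 1) / 2) < eps / 2.
  have -> : eps / 2 = INR s0.+1 * (delta / 2) by rewrite /delta; field; lra.
  apply: Rmult_lt_compat_l => //; lra.
lra.
Qed.


Lemma p_ev (d : nat -> R) (sigma c : R) : 1 < c -> 0 < sigma <= 1 ->
  (exists N, forall n, (N <= n)%N -> 0 < d n) ->
  (exists N, forall n, (N <= n)%N -> Rpower (sigma * exp 1 * d n / (2 * c)) c <= sigma / (2 * exp 1)) ->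
  exists N, forall n, (N <= n)%N -> 0 <= d n / INR n <= 1.
Proof.
move=> hc hs [N1 hd] [N2 hA].
have he := e_ge2.
have [N4 hN4] := nat_above (2 * c / (sigma * exp 1)).
exists (N1 + N2 + N4 + 1)%N => n hn.
have hn1 : (N1 <= n)%N by lia.
have hn2 : (N2 <= n)%N by lia.
have hn4 : INR N4 <= INR n by apply: le_INR; apply/leP; lia.
have hdn := hd n hn1.
have hAn := hA n hn2.
have hN : 0 < INR n by apply: lt_0_INR; lia.
have ha1 := a_lt1 hs (Rlt_le _ _ (Rlt_trans _ _ _ Rlt_0_1 hc)) hAn.
split; first by apply: Rlt_le; apply: Rdiv_lt_0_compat.
have hdb : d n < 2 * c / (sigma * exp 1).
  apply: (Rmult_lt_reg_r (sigma * exp 1 / (2 * c))).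
    apply: Rdiv_lt_0_compat; [apply: Rmult_lt_0_compat|]; lra.
  have -> : 2 * c / (sigma * exp 1) * (sigma * exp 1 / (2 * c)) = 1 by field; repeat split; lra.
  by have -> : d n * (sigma * exp 1 / (2 * c)) = sigma * exp 1 * d n / (2 * c) by field; lra.
apply: (Rmult_le_reg_r (INR n)) => //.
rewrite /Rdiv Rmult_assoc Rinv_l; lra.
Qed.

Lemma total1 n p :
  \big[Rplus/R0]_(G : {set {set 'I_n}} | G \subset edges n) gnp_weight p G = 1.
Proof.
have hE : #|edges n| = 'C(n, 2) by rewrite /edges card_draws card_ord.
have := L1 p (erefl _) (sub0set (edges n)); rewrite cards0 /= => <-.
apply: eq_big => G; first by rewrite sub0set andbT.
by rewrite /gnp_weight hE.
Qed.

Unset Implicit Arguments.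
Theorem lemma2 (d : nat -> R) (sigma theta Delta tau : R) :
  1 < theta -> 0 < sigma <= 1 ->
  (exists N : nat, forall n : nat, (N <= n)%N -> 0 < d n) ->
  (exists N : nat, forall n : nat, (N <= n)%N ->
     Rpower (sigma * exp 1 * d n / (2 * theta)) theta <= sigma / (2 * exp 1)) ->
  Un_cv (fun n => d n / Rpower (INR n) (1 - 1 / theta)) 0 ->
  0 < Delta -> 0 < tau ->
  1 < (Delta - 2 * theta) * tau ->
  (exists N : nat, forall n : nat, (N <= n)%N ->
     Rpower (sigma * exp 1 * d n / ((Delta - 2 * theta) * tau)) ((Delta - 2 * theta) * tau)
       <= sigma / (4 * exp 1)) ->
  Un_cv (fun n => d n / Rpower (INR n) (1 - 1 / ((Delta - 2 * theta) * tau))) 0 ->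
  Un_cv (fun n => gnp_prob (d n / INR n) (fun G : {set {set 'I_n}} => ~~ bad_pair sigma tau Delta G)) 1.
Proof.
move=> hth hs hd hA _ hDel htau hm hAm _.
set m := (Delta - 2 * theta) * tau.
have hm' : 1 < m := hm.
have hD2 : 0 < Delta - 2 * theta.
  apply: Rnot_le_lt => h.
  have := Rmult_le_compat_r tau _ _ (Rlt_le _ _ htau) h; rewrite Rmult_0_l; lra.
have he := e_ge2.
have hAm' : exists N, forall n, (N <= n)%N ->
    Rpower (sigma * exp 1 * d n / (2 * m)) m <= sigma / (2 * exp 1).
  case: hAm => [N1 hN1]; case: hd => [N2 hN2].
  exists (N1 + N2)%N => n hn.
  have h1 := hN1 n ltac:(lia); have h2 := hN2 n ltac:(lia).
  have hx : 0 < sigma * exp 1 * d n / m.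
    apply: Rdiv_lt_0_compat; [apply: Rmult_lt_0_compat; [apply: Rmult_lt_0_compat|]|]; lra.
  have -> : sigma * exp 1 * d n / (2 * m) = (sigma * exp 1 * d n / m) * / 2 by field; lra.
  rewrite -Rpower_mult_distr //; last lra.
  have hq : Rpower (/ 2) m <= 1 by apply: Rpower_le1; [split; lra | lra].
  have hq0 : 0 < Rpower (/ 2) m by rewrite /Rpower; exact: exp_pos.
  have hp0 : 0 < Rpower (sigma * exp 1 * d n / m) m by rewrite /Rpower; exact: exp_pos.
  have : sigma / (4 * exp 1) <= sigma / (2 * exp 1).
    apply: Rmult_le_compat_l; first lra.
    apply: Rinv_le_contravar; lra.
  rewrite -/m in h1.
  nra.
move=> eps heps.
have [N1 hN1] := @GL d sigma theta hth hs hd hA (eps / 2) ltac:(lra).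
have [N2 hN2] := @GL d sigma m hm hs hd hAm' (eps / 2) ltac:(lra).
have [N3 hN3] := p_ev hth hs hd hA.
exists (N1 + N2 + N3)%N => n /leP hn.
have h1 := hN1 n ltac:(lia); have h2 := hN2 n ltac:(lia); have hp := hN3 n ltac:(lia).
set p := d n / INR n.
rewrite -/p in h1 h2 hp.
have hw : forall G : {set {set 'I_n}}, 0 <= gnp_weight p G.
  by move=> G; rewrite /gnp_weight; apply: Rmult_le_pos; apply: pow_le; lra.
have hsplit := total1 n p.
rewrite (bigID [pred G : {set {set 'I_n}} | bad_pair sigma tau Delta G]) /= in hsplit.
set Pb := \big[Rplus/R0]_(G : {set {set 'I_n}} | (G \subset edges n) && bad_pair sigma tau Delta G) gnp_weight p G in hsplit.
have hPb0 : 0 <= Pb by apply: big_Rge0.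
have hPb : Pb <= gnp_prob p (fun G : {set {set 'I_n}} => Dense sigma theta G)
                + gnp_prob p (fun G : {set {set 'I_n}} => Dense sigma m G).
  rewrite /Pb /gnp_prob !big_mkcondr -big_split /=.
  apply: big_Rle => G hG.
  case: ifP => hb.
    have := badD hG htau hD2 hb; rewrite -/m.
    by case: (Dense sigma theta G); case: (Dense sigma m G) => //= _; have := hw G; lra.
  by case: ifP => _; case: ifP => _; have := hw G; lra.
rewrite /R_dist.
have hs' : \big[Rplus/R0]_(G : {set {set 'I_n}} | (G \subset edges n) && ~~ bad_pair sigma tau Delta G) gnp_weight p G = 1 - Pb.
  move: hsplit; set Q := \big[Rplus/R0]_(G | _) _; move=> hh; lra.
have -> : gnp_prob p (fun G : {set {set 'I_n}} => ~~ bad_pair sigma tau Delta G) = 1 - Pb.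
  by rewrite -hs'.
have -> : 1 - Pb - 1 = - Pb by ring.
rewrite Rabs_Ropp Rabs_pos_eq //; lra.
Qed.
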